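(* Let $K\ge2$, $r\in[0,1]^K$ with a unique maximizing index $a^*$ (i.e. $r(a^* )>\max_{a\ne a^*}r(a)$), and $g(\theta)=\pi_\theta^\top r$ with $\pi_\theta=\mathrm{softmax}(\theta)$. Let $\theta_1\in\mathbb{R}^K$ be arbitrary and define the normalized policy gradient iterates $\theta_{t+1}=\theta_t+\eta\,\nabla g(\theta_t)/\|\nabla g(\theta_t)\|_2$ with $\eta=1/6$. Then $\inf_{t\ge1}\pi_{\theta_t}(a^* )>0$.
   Context: $\mathrm{softmax}(\theta)(a)=e^{\theta(a)}/\sum_{a'}e^{\theta(a')}$; $\nabla g(\theta)=(\mathrm{diag}(\pi_\theta)-\pi_\theta\pi_\theta^\top)r$, which is nonzero for every $\theta$ under the stated assumptions. *)

(* Defs.v *)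
From HB Require Import structures.
From mathcomp Require Import all_boot all_order all_algebra.
From mathcomp Require Import all_classical all_reals all_analysis.
Set Implicit Arguments. Unset Strict Implicit. Unset Printing Implicit Defensive.
Import Order.TTheory GRing.Theory Num.Theory.
Local Open Scope ring_scope.

Section Defs.
Variables (R : realType) (K : nat).

Definition softmax (theta : 'I_K -> R) (a : 'I_K) : R :=
  expR (theta a) / \sum_(b < K) expR (theta b).

Definition gval (r theta : 'I_K -> R) : R :=
  \sum_(a < K) softmax theta a * r a.

(* grad g(theta) = (diag(pi) - pi pi^T) r, componentwise:
   pi(a) r(a) - pi(a) * (pi^T r) *)
Definition grad_g (r theta : 'I_K -> R) (a : 'I_K) : R :=
  softmax theta a * r a - softmax theta a * gval r theta.

Definition norm2 (v : 'I_K -> R) : R := Num.sqrt (\sum_(a < K) v a ^+ 2).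

(* normalized policy gradient iterates: npg_iter 0 = theta_1,
   npg_iter t = theta_{t+1} *)
Fixpoint npg_iter (eta : R) (r theta1 : 'I_K -> R) (t : nat) : 'I_K -> R :=
  match t with
  | 0%N => theta1
  | t'.+1 => let th := npg_iter eta r theta1 t' in
             fun a => th a + eta * (grad_g r th a / norm2 (grad_g r th))
  end.
End Defs.

(* Main.v *)
Require Import Defs.
From HB Require Import structures.
From mathcomp Require Import all_boot all_order all_algebra.
From mathcomp Require Import all_classical all_reals all_analysis.
From mathcomp Require Import ring lra.
Import Order.TTheory GRing.Theory Num.Theory.
Local Open Scope ring_scope.
Set Implicit Arguments. Unset Strict Implicit.

Section Aux.
Variables (R : realType) (K : nat) (r : 'I_K -> R) (astar : 'I_K).
Hypothesis hr : forall a, 0 <= r a <= 1.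

Lemma sm_sum_gt0 (th : 'I_K -> R) : 0 < \sum_(b < K) expR (th b).
Proof.
by rewrite (bigD1 astar) //= ltr_pwDl ?expR_gt0 // sumr_ge0 // => i _; exact/ltW/expR_gt0.

Qed.

Lemma sm_gt0 (th : 'I_K -> R) a : 0 < softmax th a.
Proof. by rewrite /softmax divr_gt0 ?expR_gt0 ?sm_sum_gt0. Qed.

Lemma sm_sum1 (th : 'I_K -> R) : \sum_(a < K) softmax th a = 1.
Proof.
rewrite /softmax -mulr_suml divff //; exact/lt0r_neq0/sm_sum_gt0.
Qed.

Lemma sm_rel (th : 'I_K -> R) a : softmax th a = softmax th astar * expR (th a - th astar).
Proof.
rewrite /softmax expRD expRN.
have h1 := expR_gt0 (th astar); have h2 := sm_sum_gt0 th.
field; apply/andP; split; exact: lt0r_neq0.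
Qed.

Lemma g_01 (th : 'I_K -> R) : 0 <= gval r th <= 1.
Proof.
apply/andP; split.
  rewrite sumr_ge0 // => i _; rewrite mulr_ge0 ?(ltW (sm_gt0 _ _)) //.
  by case/andP: (hr i).
rewrite -(sm_sum1 th) ler_sum // => i _.
rewrite ler_piMr ?(ltW (sm_gt0 _ _)) //; by case/andP: (hr i).
Qed.

Lemma v_eq (th : 'I_K -> R) a : grad_g r th a = softmax th a * (r a - gval r th).
Proof. by rewrite /grad_g mulrBr. Qed.

Lemma v_abs (th : 'I_K -> R) a : `|grad_g r th a| <= softmax th a.
Proof.
rewrite v_eq normrM gtr0_norm ?sm_gt0 // ler_piMr ?(ltW (sm_gt0 _ _)) //.
have /andP[h1 h2] := hr a; have /andP[h3 h4] := g_01 th.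
rewrite ler_norml; apply/andP; split; lra.
Qed.

Lemma v_sum0 (th : 'I_K -> R) : \sum_(a < K) grad_g r th a = 0.
Proof.
rewrite /grad_g sumrB -mulr_suml sm_sum1 mul1r.
by rewrite /gval subrr.
Qed.

Lemma v_le_norm (th : 'I_K -> R) a : `|grad_g r th a| <= norm2 (grad_g r th).
Proof.
rewrite /norm2 -sqrtr_sqr ler_sqrt ?sumr_ge0 // => [|i _]; last exact: sqr_ge0.
rewrite (bigD1 a) //= lerDl sumr_ge0 // => i _; exact: sqr_ge0.
Qed.

Lemma div_abs_le1 (x N : R) : `|x| <= N -> `|x / N| <= 1.
Proof.
move=> h; have [->|nz] := eqVneq N 0; first by rewrite invr0 mulr0 normr0.
have Np : 0 < N by rewrite lt_neqAle eq_sym nz (le_trans (normr_ge0 _) h).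
by rewrite normrM normrV ?unitfE // (gtr0_norm Np) ler_pdivrMr // mul1r.
Qed.

End Aux.

Lemma max_mono (R : realType) (x y m : R) : x <= y -> Num.max x m <= Num.max y m.
Proof.
move=> h; rewrite ge_max !le_max lexx orbT andbT.
by rewrite h.
Qed.

Lemma max_eq (R : realType) (x m : R) : m <= x -> Num.max x m = x.
Proof. by move=> h; rewrite max_l. Qed.

Lemma sum_cond_le (R : realType) (K : nat) (P : pred 'I_K) (c : R) :
  0 <= c -> \sum_(a < K | P a) c <= K%:R * c.
Proof.
move=> hc; rewrite sumr_const -[c *+ _]mulr_natl; apply: ler_wpM2r => //.
by rewrite ler_nat; have := max_card P; rewrite card_ord.
Qed.


Section Main.
Variables (R : realType) (K : nat) (r : 'I_K -> R) (astar : 'I_K).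
Hypothesis hr : forall a, 0 <= r a <= 1.
Variable Delta : R.
Hypothesis hD0 : 0 < Delta.
Hypothesis hD1 : Delta <= 1.
Hypothesis hDgap : forall a, a != astar -> Delta <= r astar - r a.
Hypothesis hK : (0 < K)%N.

Definition eps := Delta / (2 * K%:R).
Definition LL := ln eps.
Definition mm := LL - 1/3.
Definition dd (th : 'I_K -> R) a := th a - th astar.
Definition FF (th : 'I_K -> R) := \sum_(a < K) Num.max (dd th a) mm.
Definition step (th : 'I_K -> R) : 'I_K -> R :=
  fun a => th a + 1 / 6 * (grad_g r th a / norm2 (grad_g r th)).

Lemma Kpos : 0 < (K%:R : R).
Proof. by rewrite ltr0n. Qed.

Lemma eps_gt0 : 0 < eps.
Proof. by rewrite /eps divr_gt0 // mulr_gt0 // Kpos. Qed.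

Lemma eps_le1 : eps <= 1.
Proof.
rewrite /eps ler_pdivrMr ?mulr_gt0 ?Kpos // mul1r.
have hk : 1 <= (K%:R : R) by rewrite ler1n.
apply: (le_trans hD1); apply: (le_trans hk); rewrite ler_peMl //.
by rewrite ler1n.
Qed.

Lemma LL_le0 : LL <= 0.
Proof. exact: ln_le0 eps_le1. Qed.

Lemma Keps : K%:R * eps = Delta / 2.
Proof. rewrite /eps; have h := Kpos; field; exact: lt0r_neq0 h. Qed.

Lemma gapL (th : 'I_K -> R) :
  (1 - softmax th astar) * Delta <= r astar - gval r th.
Proof.
have -> : r astar - gval r th = \sum_(a < K) softmax th a * (r astar - r a).
  have e : r astar = \sum_(a < K) softmax th a * r astar.
    by rewrite -mulr_suml (sm_sum1 astar) mul1r.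
  rewrite {1}e /gval -sumrB.
  by apply: eq_bigr => i _; rewrite mulrBr.
have -> : 1 - softmax th astar = \sum_(a < K | a != astar) softmax th a.
  by rewrite -(sm_sum1 astar th) (bigD1 astar) //= addrC addrK.
rewrite [X in _ <= X](bigD1 astar) //= subrr mulr0 add0r mulr_suml.
apply: ler_sum => i hi; apply: ler_wpM2l; first exact/ltW/sm_gt0.
exact: hDgap.
Qed.

Lemma vstar_ge (th : 'I_K -> R) : softmax th astar <= 1/2 ->
  softmax th astar * Delta / 2 <= grad_g r th astar.
Proof.
move=> h; rewrite v_eq; have := gapL th; have := sm_gt0 astar th.
move=> hp hg.
have : softmax th astar * ((1 - softmax th astar) * Delta) <=
       softmax th astar * (r astar - gval r th) by rewrite ler_wpM2l // ltW.
have : 0 <= softmax th astar * Delta * (1/2 - softmax th astar).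
  by apply: mulr_ge0; [apply: mulr_ge0; apply: ltW|rewrite subr_ge0].
nra.
Qed.

Lemma dstep (th : 'I_K -> R) a : dd (step th) a =
  dd th a + (1 / 6 * (norm2 (grad_g r th))^-1) *
     (grad_g r th a - grad_g r th astar).
Proof. rewrite /dd /step; ring. Qed.

Lemma dstep_bound (th : 'I_K -> R) a : `|dd (step th) a - dd th a| <= 1/3.
Proof.
have h1 := div_abs_le1 (v_le_norm r th a).
have h2 := div_abs_le1 (v_le_norm r th astar).
have -> : dd (step th) a - dd th a =
   1/6 * (grad_g r th a / norm2 (grad_g r th)) -
   1/6 * (grad_g r th astar / norm2 (grad_g r th)) by rewrite /dd /step; ring.
move: h1 h2; set x := grad_g r th a / _; set y := grad_g r th astar / _.
rewrite !ler_norml => /andP[? ?] /andP[? ?]; apply/andP; split; lra.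
Qed.

Lemma small (th : 'I_K -> R) a : dd th a < LL ->
  softmax th a <= softmax th astar * eps.
Proof.
move=> h; rewrite (sm_rel astar th a); apply: ler_wpM2l; first exact/ltW/sm_gt0.
apply: (@le_trans _ _ (expR LL)); first by apply/ltW; rewrite ltr_expR.
by rewrite /LL lnK //; exact: eps_gt0.
Qed.


Lemma eps_le_half : eps <= Delta / 2.
Proof.
rewrite -Keps ler_peMl ?(ltW eps_gt0) // ler1n //.
Qed.

Lemma small_v (th : 'I_K -> R) a : softmax th astar <= 1/2 -> dd th a < LL ->
  grad_g r th a <= grad_g r th astar.
Proof.
move=> hp hd.
have h1 := v_abs astar hr th a.
have h2 := small hd.
have h3 := vstar_ge hp.
have h4 : softmax th astar * eps <= softmax th astar * Delta / 2.
  rewrite -mulrA; apply: ler_wpM2l; [exact/ltW/sm_gt0 | exact: eps_le_half].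
have h5 := ler_norm (grad_g r th a).
lra.
Qed.

Lemma step_le (th : 'I_K -> R) : softmax th astar <= 1/2 -> FF (step th) <= FF th.
Proof.
move=> hp.
have k0 : 0 <= 1 / 6 * (norm2 (grad_g r th))^-1.
  by apply: mulr_ge0 => //; rewrite invr_ge0 /norm2 sqrtr_ge0.
set k := 1 / 6 * (norm2 (grad_g r th))^-1 in k0.
have vs0 : 0 <= grad_g r th astar.
  apply: le_trans (vstar_ge hp); apply: mulr_ge0; last by [].
  by apply: mulr_ge0; [exact/ltW/sm_gt0 | exact: ltW].
have hmL : mm < LL by rewrite /mm; lra.
rewrite /FF -subr_le0 -sumrB (bigID (fun a => LL <= dd th a)) /=.
have hneg : \sum_(i < K | ~~ (LL <= dd th i))
    (Num.max (dd (step th) i) mm - Num.max (dd th i) mm) <= 0.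
  apply: sumr_le0 => i hi; rewrite subr_le0; apply: max_mono.
  rewrite dstep; rewrite -[X in _ <= X]addr0 lerD2l; apply: mulr_ge0_le0 => //.
  rewrite subr_le0; apply: small_v => //; by rewrite ltNge.
have hpos : \sum_(i < K | LL <= dd th i)
    (Num.max (dd (step th) i) mm - Num.max (dd th i) mm) =
    k * \sum_(i < K | LL <= dd th i) (grad_g r th i - grad_g r th astar).
  rewrite mulr_sumr; apply: eq_bigr => i hi.
  have hb := dstep_bound th i; rewrite ler_norml in hb; case/andP: hb => hb _.
  rewrite (@max_eq _ (dd th i)); last by rewrite ltW // (lt_le_trans hmL).
  rewrite (@max_eq _ (dd (step th) i)); last by move: hi; rewrite /mm; lra.
  by rewrite dstep addrC addKr.
have hsum : \sum_(i < K | LL <= dd th i) (grad_g r th i - grad_g r th astar) <= 0.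
  rewrite sumrB.
  have e0 := v_sum0 r astar th; rewrite (bigID (fun a => LL <= dd th a)) /= in e0.
  have hS : - \sum_(i < K | ~~ (LL <= dd th i)) grad_g r th i <=
            grad_g r th astar.
    rewrite -sumrN; apply: le_trans (vstar_ge hp).
    apply: (@le_trans _ _ (\sum_(i < K | ~~ (LL <= dd th i)) (softmax th astar * eps))).
      apply: ler_sum => i hi.
      have := v_abs astar hr th i; have := small (th:=th) (a:=i).
      rewrite ltNge hi => /(_ isT) h1 h2.
      have h3 := ler_norm (- grad_g r th i); rewrite normrN in h3; lra.
    apply: le_trans; first apply: sum_cond_le.
      by apply: mulr_ge0; [exact/ltW/sm_gt0 | exact/ltW/eps_gt0].
    by rewrite mulrCA Keps mulrA.
  have hA : grad_g r th astar <= \sum_(i < K | LL <= dd th i) grad_g r th astar.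
    rewrite (bigD1 astar) /=; last by rewrite /dd subrr LL_le0.
    by rewrite lerDl sumr_ge0.
  have e1 : \sum_(i < K | LL <= dd th i) grad_g r th i =
            - \sum_(i < K | ~~ (LL <= dd th i)) grad_g r th i.
    by apply/eqP; rewrite -addr_eq0 e0.
  rewrite e1; lra.
rewrite hpos; have := mulr_ge0_le0 k0 hsum; lra.
Qed.

Lemma step_big (th : 'I_K -> R) : 1/2 < softmax th astar -> FF (step th) <= K%:R / 3.
Proof.
move=> hp.
have hd : forall a, dd th a <= 0.
  move=> a; have [->|na] := eqVneq a astar; first by rewrite /dd subrr.
  have hs := sm_sum1 astar th; rewrite (bigD1 astar) //= (bigD1 a) //= in hs.
  have hrest : 0 <= \sum_(i < K | (i != astar) && (i != a)) softmax th i.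
    by apply: sumr_ge0 => i _; exact/ltW/sm_gt0.
  have hpa : softmax th a < softmax th astar by lra.
  rewrite (sm_rel astar th a) in hpa.
  have hp0 := sm_gt0 astar th astar.
  have : expR (th a - th astar) < 1.
    rewrite -(ltr_pM2l hp0) mulr1; exact: hpa.
  rewrite -expR0 ltr_expR /dd => h; exact: ltW.
rewrite /FF (_ : K%:R / 3 = \sum_(a < K) (1 / 3 : R)); last first.
  rewrite sumr_const cardT size_enum_ord -[_ *+ K]mulr_natr; ring.
apply: ler_sum => a _; rewrite ge_max; apply/andP; split.
  have hb := dstep_bound th a; rewrite ler_norml in hb; case/andP: hb => _ hb.
  have := hd a; lra.
have := LL_le0; rewrite /mm; lra.
Qed.
End Main.

Theorem lemma4 (R : realType) (K : nat) (hK : (2 <= K)%N)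
  (r : 'I_K -> R) (hr : forall a, 0 <= r a <= 1)
  (astar : 'I_K) (hstar : forall a, a != astar -> r a < r astar)
  (theta1 : 'I_K -> R) :
  exists c : R, 0 < c /\
    forall t : nat, c <= softmax (npg_iter (1 / 6) r theta1 t) astar.
Proof.
have hK1 : (0 < K)%N by apply: leq_trans hK.
set Delta := \big[Num.min/1]_(a | a != astar) (r astar - r a).
have hD0 : 0 < Delta.
  apply: (big_ind (fun x => 0 < x)) => //; first by move=> x y hx hy; rewrite lt_min hx hy.
  by move=> i hi; rewrite subr_gt0 hstar.
have hD1 : Delta <= 1 by exact: bigmin_le_id.
have hDgap : forall a, a != astar -> Delta <= r astar - r a.
  by move=> a ha; exact: bigmin_le_cond.
pose th t := npg_iter (1 / 6) r theta1 t.
have hst : forall t, th t.+1 = step r (th t) by [].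
pose F := @FF R K astar Delta.
set C := Num.max (F (th 0%N)) (K%:R / 3).
have hC : forall t, F (th t) <= C.
  elim=> [|t IH]; first by rewrite le_max lexx.
  rewrite hst; have [hp|hp] := leP (softmax (th t) astar) (1/2).
    have hh := (@step_le R K r astar hr Delta hD0 hD1 hDgap hK1 (th t) hp).
    exact: (le_trans hh IH).
  have hh := (@step_big R K r astar Delta hD1 hK1 (th t) hp).
  apply: (le_trans hh).
  by rewrite le_max lexx orbT.
set m := @mm R K Delta.
set B := C - K%:R * m + m.
have hB : forall t a, dd astar (th t) a <= B.
  move=> t a; have := hC t; rewrite /F /FF -/m => h.
  have h1 : Num.max (dd astar (th t) a) m - m <=
            \sum_(b < K) (Num.max (dd astar (th t) b) m - m).
    rewrite (bigD1 a) //= lerDl sumr_ge0 // => b _.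
    by rewrite subr_ge0 le_max lexx orbT.
  rewrite sumrB sumr_const card_ord -mulr_natl in h1.
  have h2 : dd astar (th t) a <= Num.max (dd astar (th t) a) m by rewrite le_max lexx.
  rewrite /B; lra.
have hKR : 0 < (K%:R : R) by rewrite ltr0n.
have hX : 0 < K%:R * expR B by rewrite mulr_gt0 // expR_gt0.
exists (1 / (K%:R * expR B)); split; first by rewrite divr_gt0.
move=> t; rewrite -/(th t) ler_pdivrMr //.
rewrite -[X in X <= _](sm_sum1 astar (th t)).
apply: le_trans (_ : \sum_(b < K) (softmax (th t) astar * expR B) <= _).
  apply: ler_sum => b _; rewrite (sm_rel astar (th t) b).
  apply: ler_wpM2l; first exact/ltW/sm_gt0.
  by rewrite ler_expR; exact: hB.
rewrite sumr_const cardT size_enum_ord -[_ *+ K]mulr_natr le_eqVlt; apply/orP; left; apply/eqP; ring.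
Qed.
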